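(* Let $\langle\{a,b\},C,d,O,v,\{\prec,\prec^{-1}\}\rangle$ be a two-player infinite sequential game in which player $a$ has preference $\prec$ and player $b$ has preference $\prec^{-1}$, let $\Gamma\subseteq\mathcal{P}(C^\omega)$, and assume: (1) $\prec$ is a strict weak order; (2) for every play $p\in C^\omega$ and increasing $\varphi:\mathbb{N}\to\mathbb{N}$, if $d(p_{<\varphi(n)})=a$ and $G_a(p_{<\varphi(n+1)})\subsetneq G_a(p_{<\varphi(n)})$ for all $n$, then $v(p)\in\bigcap_n G_a(p_{<\varphi(n)})$; (3) for all $\gamma\in C^*$ there exists a strategy $s$ of $a$ with $g_a(\gamma,s)=G_a(\gamma)$, and there exists a strategy $s$ of $b$ with $g_b(\gamma,s)=G_b(\gamma)$; (4) for every non-empty closed $E\subseteq C^\omega$, $v[E]$ has a $\prec$-maximal and a $\prec$-minimal element (i.e. some $o\in v[E]$ with $\neg(o\prec o')$ for all $o'\in v[E]$, and some $o\in v[E]$ with $\neg(o'\prec o)$ for all $o'\in v[E]$); (5) for every $\prec$-extremal interval $I$ and $\gamma\in C^*$, $v^{-1}[I]\cap\gamma C^\omega\in\Gamma$; (6) the win-lose game $\langle C,D,W\rangle$ is determined for all $W\in\Gamma$ and $D\subseteq C^*$. Then the game has a subgame perfect equilibrium.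
   Context: A strategy of player $X$ is a function $s:d^{-1}(\{X\})\to C$; a profile is identified with $\sigma:C^*\to C$. For $\gamma\in C^*$, the play $p^\gamma(\sigma)$ is given by $p_n=\gamma_n$ for $n<|\gamma|$ and $p_n=\sigma(p_{<n})$ otherwise ($p_{<n}$ the length-$n$ prefix). A profile $\sigma$ is a subgame perfect equilibrium if there are no $\gamma\in C^*$, player $X$ and strategy $s$ of $X$ such that $v(p^\gamma(\sigma))\prec_X v(p^\gamma(\sigma_{X\mapsto s}))$ (with $\prec_a=\prec$, $\prec_b=\prec^{-1}$, and $\sigma_{X\mapsto s}$ agreeing with $s$ on $d^{-1}(\{X\})$ and with $\sigma$ elsewhere). For a partial $t:\subseteq C^*\to C$, $P(t)$ is the set of plays $p(\sigma)$ of total $\sigma$ extending $t$. For a strategy $s$ of $X$ and $\gamma\in C^*$, $s|_\gamma$ is its restriction to histories extending $\gamma$; $g_X(\gamma,s):=\{o\in O\mid\exists p\in P(s|_\gamma)\cap\gamma C^\omega,\ \neg(o\prec_X v(p))\}$ and $G_X(\gamma):=\bigcap_s g_X(\gamma,s)$. A strict weak order is an irreflexive, transitive relation with $\neg(x\prec y)\wedge\neg(y\prec z)\Rightarrow\neg(x\prec z)$. A $\prec$-extremal interval is a set $I\subseteq O$ that is either terminal (if $o\in I$ and $\neg(o'\prec o)$ then $o'\in I$) or initial (if $o\in I$ and $\neg(o\prec o')$ then $o'\in I$). The win-lose game $\langle C,D,W\rangle$ ($D\subseteq C^*$, $W\subseteq C^\omega$) is the two-player game where the first player chooses after histories in $D$,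 the second after histories in $C^*\setminus D$, and the first player wins iff the play lies in $W$; it is determined if one of the players has a winning strategy. *)

(* Defs.v *)
From Stdlib Require Import List Arith.
Import ListNotations.
Set Implicit Arguments.

Inductive Player : Type := pa | pb.

Definition Player_eq_dec (x y : Player) : {x = y} + {x <> y}.
Proof. decide equality. Defined.

Section Games.
Variables (C O : Type).

Definition pre (p : nat -> C) (n : nat) : list C := map p (seq 0 n).

Definition extends (gamma h : list C) : Prop := exists l, h = gamma ++ l.

Definition cyl (gamma : list C) (p : nat -> C) : Prop := pre p (length gamma) = gamma.

Definition next (gamma : list C) (sigma : list C -> C) (h : list C) : C :=
  match nth_error gamma (length h) with Some c => c | None => sigma h end.

Fixpoint hist (gamma : list C) (sigma : list C -> C) (n : nat) : list C :=
  match n with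
  | 0 => []
  | S m => hist gamma sigma m ++ [next gamma sigma (hist gamma sigma m)]
  end.

Definition play (gamma : list C) (sigma : list C -> C) : nat -> C :=
  fun n => next gamma sigma (hist gamma sigma n).

Variables (d : list C -> Player) (v : (nat -> C) -> O) (prec : O -> O -> Prop).

Definition precX (X : Player) (x y : O) : Prop :=
  match X with pa => prec x y | pb => prec y x end.

(* a strategy of X is encoded as a total function list C -> C;
   only its values on d^{-1}({X}) are ever used *)
Definition deviate (sigma : list C -> C) (X : Player) (s : list C -> C) : list C -> C :=
  fun h => if Player_eq_dec (d h) X then s h else sigma h.

Definition SPE (sigma : list C -> C) : Prop :=
  ~ exists (gamma : list C) (X : Player) (s : list C -> C),
      precX X (v (play gamma sigma)) (v (play gamma (deviate sigma X s))).

(* P(s|_gamma): plays p(sigma) of total profiles sigma extending s restricted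
   to the histories in d^{-1}({X}) that extend gamma *)
Definition Prestr (X : Player) (s : list C -> C) (gamma : list C) (p : nat -> C) : Prop :=
  exists sigma : list C -> C,
    (forall h, d h = X -> extends gamma h -> sigma h = s h) /\
    (forall n, p n = play [] sigma n).

Definition gX (X : Player) (gamma : list C) (s : list C -> C) (o : O) : Prop :=
  exists p, Prestr X s gamma p /\ cyl gamma p /\ ~ precX X o (v p).

Definition GX (X : Player) (gamma : list C) (o : O) : Prop :=
  forall s : list C -> C, gX X gamma s o.

End Games.

Definition strict_weak_order {O : Type} (prec : O -> O -> Prop) : Prop :=
  (forall x, ~ prec x x) /\
  (forall x y z, prec x y -> prec y z -> prec x z) /\
  (forall x y z, ~ prec x y -> ~ prec y z -> ~ prec x z).

(* closed subsets of C^omega for the product of discrete topologies *)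
Definition closed_set {C : Type} (E : (nat -> C) -> Prop) : Prop :=
  forall p, (forall n, exists q, E q /\ pre q n = pre p n) -> E p.

Definition terminal_interval {O : Type} (prec : O -> O -> Prop) (I : O -> Prop) : Prop :=
  forall o o', I o -> ~ prec o' o -> I o'.

Definition initial_interval {O : Type} (prec : O -> O -> Prop) (I : O -> Prop) : Prop :=
  forall o o', I o -> ~ prec o o' -> I o'.

Definition extremal_interval {O : Type} (prec : O -> O -> Prop) (I : O -> Prop) : Prop :=
  terminal_interval prec I \/ initial_interval prec I.

(* the win-lose game <C,D,W>: the first player plays after histories in D,
   the second after histories outside D; a profile sigma combines strategies
   s1 (on D) and s2 (off D) *)
Definition determined {C : Type} (D : list C -> Prop) (W : (nat -> C) -> Prop) : Prop :=
  (exists s1 : list C -> C, forall sigma : list C -> C,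
      (forall h, D h -> sigma h = s1 h) -> W (play [] sigma)) \/
  (exists s2 : list C -> C, forall sigma : list C -> C,
      (forall h, ~ D h -> sigma h = s2 h) -> ~ W (play [] sigma)).

(* Main.v *)
Require Import Defs.
From Stdlib Require Import List Arith Lia Classical ClassicalEpsilon FunctionalExtensionality.
Import ListNotations.

Section Basics.
Context {C : Type}.

Lemma pre_length (p : nat -> C) n : length (pre p n) = n.
Proof. unfold pre. now rewrite length_map, length_seq. Qed.

Lemma pre_S (p : nat -> C) n : pre p (S n) = pre p n ++ [p n].
Proof. unfold pre. now rewrite seq_S, map_app. Qed.

Lemma nth_error_pre (p : nat -> C) n k :
  nth_error (pre p n) k = if k <? n then Some (p k) else None.
Proof. unfold pre. rewrite nth_error_map, nth_error_seq. now destruct (k <? n). Qed.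

Lemma pre_eq_lt (p q : nat -> C) n k : pre p n = pre q n -> k < n -> p k = q k.
Proof.
  intros H Hk. assert (E := f_equal (fun l => nth_error l k) H). simpl in E.
  rewrite !nth_error_pre in E. apply Nat.ltb_lt in Hk. rewrite Hk in E. congruence.
Qed.

Lemma pre_ext (p q : nat -> C) n : (forall k, k < n -> p k = q k) -> pre p n = pre q n.
Proof.
  intros H. unfold pre. apply map_ext_in. intros a Ha. apply in_seq in Ha. apply H. lia.
Qed.

Lemma pre_eq_le (p q : nat -> C) n m : pre p n = pre q n -> m <= n -> pre p m = pre q m.
Proof. intros H Hm. apply pre_ext. intros k Hk. apply (pre_eq_lt p q n); auto; lia. Qed.

Lemma hist_pre (g : list C) s n : hist g s n = pre (play g s) n.
Proof.
  induction n; simpl; auto. rewrite pre_S, IHn. unfold play. now rewrite IHn.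
Qed.

Lemma play_ge (g : list C) s n : length g <= n -> play g s n = s (pre (play g s) n).
Proof.
  intros H. unfold play at 1. rewrite hist_pre. unfold next. rewrite pre_length.
  assert (nth_error g n = None) as E by (apply nth_error_None; auto). now rewrite E.
Qed.

Lemma play_lt (g : list C) s n c : nth_error g n = Some c -> play g s n = c.
Proof.
  intros H. unfold play. rewrite hist_pre. unfold next. rewrite pre_length. now rewrite H.
Qed.

Lemma cyl_play (g : list C) s : cyl g (play g s).
Proof.
  unfold cyl. apply nth_error_ext. intros n. rewrite nth_error_pre.
  destruct (n <? length g) eqn:E.
  - apply Nat.ltb_lt in E. destruct (nth_error g n) eqn:E2.
    + f_equal. now apply play_lt.
    + apply nth_error_None in E2. lia.
  - apply Nat.ltb_ge in E. symmetry. now apply nth_error_None.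
Qed.

Lemma play_unique (F : list C -> C) (p q : nat -> C) m :
  pre p m = pre q m -> (forall n, m <= n -> p n = F (pre p n)) ->
  (forall n, m <= n -> q n = F (pre q n)) -> p = q.
Proof.
  intros H0 Hp Hq.
  assert (forall n, pre p n = pre q n) as A.
  { induction n. reflexivity.
    destruct (le_lt_dec (S n) m) as [h|h].
    - apply (pre_eq_le p q m); auto.
    - rewrite !pre_S, IHn. rewrite (Hp n), (Hq n) by lia. now rewrite IHn. }
  apply functional_extensionality. intros k. apply (pre_eq_lt p q (S k)); auto.
Qed.

Lemma pre_extends (g : list C) p n : cyl g p -> length g <= n -> extends g (pre p n).
Proof.
  intros H Hn. unfold cyl in H. exists (map p (seq (length g) (n - length g))).
  replace n with (length g + (n - length g)) at 1 by lia.
  unfold pre. rewrite seq_app, map_app. simpl. fold (pre p (length g)). now rewrite H.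
Qed.

Lemma extends_length (g h : list C) : extends g h -> length g <= length h.
Proof. intros [l ->]. rewrite length_app. lia. Qed.

Lemma cyl_play_gen (g : list C) (q : nat -> C) : cyl g q -> pre q (length g) = g.
Proof. auto. Qed.

End Basics.
Section Game.
Context {C O : Type} (d : list C -> Player) (v : (nat -> C) -> O) (prec : O -> O -> Prop).

Definition consX (X : Player) (s : list C -> C) (g : list C) (p : nat -> C) : Prop :=
  forall n, length g <= n -> d (pre p n) = X -> p n = s (pre p n).

Lemma gX_iff X g s o :
  gX d v prec X g s o <-> exists p, cyl g p /\ consX X s g p /\ ~ precX prec X o (v p).
Proof.
  split.
  - intros [p [[sg [Ha Hp]] [Hc Hn]]].
    assert (p = play [] sg) as E by (apply functional_extensionality; auto). subst p.
    exists (play [] sg). split; auto. split; auto.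
    intros n Hn' Hd. rewrite play_ge by (simpl; lia). apply Ha; auto.
    apply pre_extends; auto.
  - intros [p [Hc [Hcons Hn]]].
    set (sg := fun h => if excluded_middle_informative (h = pre p (length h))
                       then p (length h) else s h).
    assert (p = play [] sg) as E.
    { apply (play_unique sg p (play [] sg) 0); auto.
      - intros n _. unfold sg. cbv beta. rewrite pre_length.
        destruct excluded_middle_informative as [_|c]; auto. exfalso. now apply c.
      - intros n _. apply play_ge. simpl; lia. }
    exists p. split; [|split; auto].
    exists sg. split.
    + intros h Hd He. unfold sg. cbv beta. destruct excluded_middle_informative as [E1|_]; auto.
      apply extends_length in He. rewrite Hcons; [now rewrite <- E1| lia | now rewrite <- E1].
    + intros n. now rewrite <- E.
Qed.

Lemma swo_b : strict_weak_order prec -> strict_weak_order (precX prec pb).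
Proof.
  intros [h1 [h2 h3]]. split; [|split]; simpl; eauto.
Qed.


Lemma L_lemma (Gamma : ((nat -> C) -> Prop) -> Prop) :
  strict_weak_order prec ->
  (forall (I : O -> Prop) (gamma : list C), extremal_interval prec I ->
      Gamma (fun p => I (v p) /\ cyl gamma p)) ->
  (forall (W : (nat -> C) -> Prop) (D : list C -> Prop), Gamma W -> determined D W) ->
  forall g x y, GX d v prec pa g x -> GX d v prec pb g y -> ~ prec x y.
Proof.
  intros [sw1 [sw2 sw3]] H5 H6 g x y Gx Gy Hxy.
  set (I := fun o => prec x o).
  assert (HI : extremal_interval prec I).
  { left. intros o o' Ho Hno. unfold I in *. apply NNPP. intro Hc. exact (sw3 _ _ _ Hc Hno Ho). }
  set (D := fun h : list C => ~ extends g h \/ d h = pa).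
  destruct (H6 _ D (H5 I g HI)) as [[s1 Hs1]|[s2 Hs2]].
  - destruct (proj1 (gX_iff _ _ _ _) (Gx s1)) as [p [Hc [Hcons Hn]]].
    set (F := fun h => if excluded_middle_informative (D h) then s1 h else p (length h)).
    assert (HW := Hs1 F (fun h Dh => ltac:(unfold F; destruct excluded_middle_informative; tauto))).
    assert (p = play [] F) as E.
    { apply (play_unique F p (play [] F) (length g)).
      - rewrite Hc. symmetry. apply cyl_play_gen. exact (proj2 HW).
      - intros n Hn'. unfold F. cbv beta. destruct excluded_middle_informative as [[Dh|Dh]|nD].
        + exfalso. apply Dh. apply pre_extends; auto.
        + now apply Hcons.
        + now rewrite pre_length.
      - intros n _. apply play_ge. simpl; lia. }
    rewrite <- E in HW. destruct HW as [HW _]. exact (Hn HW).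
  - destruct (proj1 (gX_iff _ _ _ _) (Gy s2)) as [p [Hc [Hcons Hn]]].
    set (F := fun h => if excluded_middle_informative (D h) then p (length h) else s2 h).
    assert (HW := Hs2 F (fun h Dh => ltac:(unfold F; destruct excluded_middle_informative; tauto))).
    assert (p = play [] F) as E.
    { apply (play_unique F p (play [] F) 0); auto.
      - intros n _. unfold F. cbv beta. destruct excluded_middle_informative as [Dh|nD].
        + now rewrite pre_length.
        + unfold D in nD. apply not_or_and in nD. destruct nD as [e1 e2].
          apply NNPP in e1. apply extends_length in e1. rewrite pre_length in e1.
          apply Hcons; auto. destruct (d (pre p n)); congruence.
      - intros n _. apply play_ge. simpl; lia. }
    rewrite <- E in HW. simpl in Hn.
    assert (~ prec x (v p)) as H1 by (intro h; apply HW; split; auto).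
    exact (sw3 _ _ _ H1 Hn Hxy).
Qed.

End Game.

Section Uniform.
Context {C O : Type} (d : list C -> Player) (v : (nat -> C) -> O) (prec : O -> O -> Prop).
Context (X Y : Player) (XY : X <> Y) (dY : forall h, d h <> X -> d h = Y).
Context (swo : strict_weak_order (precX prec X)).
Context (sX sY : list C -> list C -> C).
Context (sXs : forall g o, gX d v prec X g (sX g) o <-> GX d v prec X g o).
Context (sYs : forall g o, gX d v prec Y g (sY g) o <-> GX d v prec Y g o).
Context (LX : forall g x y, GX d v prec X g x -> GX d v prec Y g y -> ~ precX prec X x y).
Context (H4X : forall E : (nat -> C) -> Prop, (exists p, E p) -> closed_set E ->
      exists o, (exists p, E p /\ v p = o) /\
         forall o', (exists p', E p' /\ v p' = o') -> ~ precX prec X o o').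

Notation R := (precX prec X).
Notation G := (GX d v prec X).

Definition cond (b h : list C) (c : C) : Prop :=
  (d h = X -> c = sX b h) /\ (forall o, G (h ++ [c]) o <-> G b o).

Fixpoint arev (r : list C) : list C :=
  match r with
  | [] => []
  | c :: r' => if excluded_middle_informative (cond (arev r') (rev r') c) then arev r'
               else rev r' ++ [c]
  end.

Definition anchor (h : list C) := arev (rev h).

Lemma anchor_snoc h c : anchor (h ++ [c]) =
  if excluded_middle_informative (cond (anchor h) h c) then anchor h else h ++ [c].
Proof. unfold anchor. rewrite rev_unit. simpl. now rewrite rev_involutive. Qed.

Definition strat (h : list C) : C := sX (anchor h) h.

Lemma Inv q n : exists m, m <= n /\ anchor (pre q n) = pre q m /\
  (forall k, m <= k < n -> d (pre q k) = X -> q k = sX (pre q m) (pre q k)) /\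
  (forall o, G (pre q n) o <-> G (pre q m) o).
Proof.
  induction n.
  - exists 0. repeat split; auto; lia.
  - destruct IHn as [m [Hm [Ha [Hc Hg]]]].
    assert (Hs := anchor_snoc (pre q n) (q n)). rewrite <- pre_S in Hs.
    destruct excluded_middle_informative as [[c1 c2]|nc].
    + exists m. rewrite Ha in c1, c2. split; [lia|]. split; [congruence|]. split.
      * intros k Hk Hd. destruct (Nat.eq_dec k n) as [->|ne]; auto. apply Hc; auto; lia.
      * intros o. rewrite pre_S. auto.
    + exists (S n). repeat split; auto; try lia; tauto.
Qed.

Lemma mono_g s q m n o : m <= n ->
  (forall k, m <= k < n -> d (pre q k) = X -> q k = s (pre q k)) ->
  gX d v prec X (pre q n) s o -> gX d v prec X (pre q m) s o.
Proof.
  intros Hmn Hc Hg. apply gX_iff in Hg. apply gX_iff.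
  destruct Hg as [p [Hcy [Hcons Hn]]]. unfold cyl in Hcy. rewrite pre_length in Hcy.
  exists p. split; [|split; auto].
  - unfold cyl. rewrite pre_length. apply (pre_eq_le _ _ n); auto.
  - intros k Hk Hd. rewrite pre_length in Hk. destruct (le_lt_dec n k) as [h|h].
    + apply Hcons; auto. now rewrite pre_length.
    + assert (pre p k = pre q k) as E by (apply (pre_eq_le _ _ n); auto; lia).
      rewrite E in *. rewrite (pre_eq_lt p q n k); auto.
Qed.

Lemma upclose g o o' : G g o -> ~ R o' o -> G g o'.
Proof.
  intros Hg Hn s. destruct (proj1 (gX_iff _ _ _ _ _ _ _) (Hg s)) as [p [H1 [H2 H3]]].
  apply gX_iff. exists p. repeat split; auto. destruct swo as [_ [_ s3]]. eauto.
Qed.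

Section Play.
Context (g : list C) (q : nat -> C) (Hcy : cyl g q) (Hco : consX d X strat g q).

Lemma mono1 n o : length g <= n -> G (pre q (S n)) o -> G (pre q n) o.
Proof.
  intros Hn Hg. destruct (Inv q n) as [m [Hm [Ha [Hc Hgg]]]].
  apply Hgg. apply sXs. apply (mono_g _ q m (S n)); [lia| |].
  - intros k Hk Hd. destruct (Nat.eq_dec k n) as [->|ne].
    + rewrite (Hco n Hn Hd). unfold strat. now rewrite Ha.
    + apply Hc; auto; lia.
  - apply Hg.
Qed.

Lemma monok n k o : length g <= n -> G (pre q (n + k)) o -> G (pre q n) o.
Proof.
  intros Hn. induction k; intros Hg.
  - now rewrite Nat.add_0_r in Hg.
  - apply IHk. apply mono1; [lia|]. now rewrite <- Nat.add_succ_r.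
Qed.

Lemma monole n n' o : length g <= n -> n <= n' -> G (pre q n') o -> G (pre q n) o.
Proof. intros H1 H2. replace n' with (n + (n' - n)) by lia. now apply monok. Qed.

Lemma existsE g' : exists r, cyl g' r /\ G g' (v r) /\ GX d v prec Y g' (v r).
Proof.
  set (sg := fun h => if Player_eq_dec (d h) X then sX g' h else sY g' h).
  assert (Hsg : forall h, sg h = if Player_eq_dec (d h) X then sX g' h else sY g' h) by reflexivity.
  clearbody sg.
  exists (play g' sg). split; [apply cyl_play|]. destruct swo as [s1 _]. split.
  - apply sXs. apply gX_iff. exists (play g' sg). split; [apply cyl_play|]. split; auto.
    intros n Hn Hd. rewrite play_ge by auto. rewrite Hsg. destruct Player_eq_dec; congruence.
  - apply sYs. apply gX_iff. exists (play g' sg). split; [apply cyl_play|]. split.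
    + intros n Hn Hd. rewrite play_ge by auto. rewrite Hsg. destruct Player_eq_dec; congruence.
    + destruct Y; simpl in *; auto; destruct X; simpl in *; auto.
Qed.

Lemma char g' r o : G g' (v r) -> GX d v prec Y g' (v r) -> (G g' o <-> ~ R o (v r)).
Proof.
  intros H1 H2. split.
  - intros H3. apply (LX g'); auto.
  - intros H3. now apply (upclose _ (v r)).
Qed.



Lemma U_main : G g (v q).
Proof.
  destruct swo as [sw1 [sw2 sw3]].
  assert (Hg : pre q (length g) = g) by exact Hcy.
  destruct (classic (exists N, length g <= N /\ forall n, N <= n -> forall o, G (pre q n) o <-> G (pre q N) o))
    as [[N [HN Hst]]|Hinf].
  - assert (Hanc : forall k, anchor (pre q (N + k)) = anchor (pre q N)).
    { induction k. now rewrite Nat.add_0_r.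
      rewrite Nat.add_succ_r, pre_S, anchor_snoc.
      destruct excluded_middle_informative as [_|nc]; auto. exfalso. apply nc. split.
      - intros Hd. rewrite (Hco (N + k)) by (auto; lia). reflexivity.
      - intros o. rewrite <- pre_S. rewrite (Hst (S (N + k))) by lia.
        destruct (Inv q (N + k)) as [m [_ [Ha [_ Hgg]]]]. rewrite Ha. rewrite <- Hgg.
        rewrite (Hst (N + k)) by lia. tauto. }
    destruct (Inv q N) as [m [Hm [Ha [Hc Hgg]]]].
    assert (G (pre q m) (v q)) as Hq.
    { apply sXs. apply gX_iff. exists q. split; [unfold cyl; now rewrite pre_length|]. split; auto.
      intros n Hn Hd. rewrite pre_length in Hn. destruct (le_lt_dec N n) as [h|h].
      - rewrite (Hco n) by (auto; lia). unfold strat.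
        replace n with (N + (n - N)) by lia. rewrite Hanc, Ha. reflexivity.
      - apply Hc; auto; lia. }
    apply Hgg in Hq. rewrite <- Hg. apply (monole (length g) N); [lia|lia|exact Hq].
  - assert (Hinf' : forall N, length g <= N -> exists n, N <= n /\ exists o, G (pre q N) o /\ ~ G (pre q n) o).
    { intros N HN. apply NNPP. intro Hc. apply Hinf. exists N. split; auto.
      intros n Hn o. split.
      - intros H. now apply (monole N n).
      - intros H. apply NNPP. intro H'. apply Hc. exists n. split; auto. exists o. auto. }
    clear Hinf.
    set (r := fun n => proj1_sig (constructive_indefinite_description _ (existsE (pre q n)))).
    assert (Hr : forall n, cyl (pre q n) (r n) /\ G (pre q n) (v (r n)) /\ GX d v prec Y (pre q n) (v (r n)))
      by (intros n; unfold r; destruct constructive_indefinite_description; auto).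
    clearbody r.
    set (E := fun p => p = q \/ exists n, length g <= n /\ p = r n).
    assert (HE : closed_set E).
    { intros p Hp. destruct (classic (p = q)) as [->|ne]; [now left|].
      assert (exists k, p k <> q k) as [k Hk].
      { apply NNPP. intro H. apply ne. apply functional_extensionality. intros x.
        apply NNPP. intro H'. apply H. now exists x. }
      right. apply NNPP. intro Hno.
      assert (Hb : forall M, exists B, forall n, length g <= n -> n < M -> exists i, i < B /\ p i <> r n i).
      { induction M.
        - exists 0. intros; lia.
        - destruct IHM as [B HB]. destruct (le_lt_dec (length g) M) as [h|h].
          + assert (exists i, p i <> r M i) as [i Hi].
            { apply NNPP. intro H. apply Hno. exists M. split; auto. apply functional_extensionality.
              intros x. apply NNPP. intro H'. apply H. now exists x. }
            exists (Nat.max B (S i)). intros n Hn HnM. destruct (Nat.eq_dec n M) as [->|nn].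
            * exists i. split; auto; lia.
            * destruct (HB n) as [j [Hj1 Hj2]]; auto; try lia. exists j. split; auto; lia.
          + exists B. intros n Hn HnM. apply HB; auto; lia. }
      destruct (Hb (S k)) as [B HB].
      destruct (Hp (B + S k)) as [e [[->|[n [Hn ->]]] He]].
      - apply Hk. symmetry. apply (pre_eq_lt _ _ (B + S k)); auto; lia.
      - destruct (lt_dec n (S k)) as [h|h].
        + destruct (HB n) as [i [Hi1 Hi2]]; auto. apply Hi2. symmetry.
          apply (pre_eq_lt _ _ (B + S k)); auto; lia.
        + destruct (Hr n) as [Hc _]. unfold cyl in Hc. rewrite pre_length in Hc.
          apply Hk. rewrite <- (pre_eq_lt _ _ (B + S k) k He) by lia.
          apply (pre_eq_lt _ _ n); auto; lia. }
    destruct (H4X E (ex_intro _ q (or_introl eq_refl)) HE) as [o [[p [Ep <-]] Hmax]].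
    destruct Ep as [->|[k [Hk ->]]].
    + destruct (Hr (length g)) as [_ [H1 H2]]. rewrite <- Hg.
      apply (proj2 (char _ _ _ H1 H2)). apply Hmax. exists (r (length g)). split; auto.
      right. exists (length g). auto.
    + exfalso. destruct (Hinf' k Hk) as [n [Hn [o1 [Ho1 Hno1]]]].
      destruct (Hr k) as [_ [Hk1 Hk2]]. destruct (Hr n) as [_ [Hn1 Hn2]].
      apply (char _ _ _ Hk1 Hk2) in Ho1.
      rewrite (char _ _ _ Hn1 Hn2) in Hno1. apply NNPP in Hno1.
      assert (~ R (v (r k)) (v (r n))) as Hm.
      { apply Hmax. exists (r n). split; auto. right. exists n. split; auto; lia. }
      exact (sw3 _ _ _ Ho1 Hm Hno1).
Qed.

End Play.
End Uniform.

Theorem lemma22 (C O : Type) (d : list C -> Player) (v : (nat -> C) -> O)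
  (prec : O -> O -> Prop) (Gamma : ((nat -> C) -> Prop) -> Prop) :
  strict_weak_order prec ->
  (forall (p : nat -> C) (phi : nat -> nat),
      (forall n, phi n < phi (S n)) ->
      (forall n, d (pre p (phi n)) = pa /\
         (forall o, GX d v prec pa (pre p (phi (S n))) o ->
                    GX d v prec pa (pre p (phi n)) o) /\
         (exists o, GX d v prec pa (pre p (phi n)) o /\
                    ~ GX d v prec pa (pre p (phi (S n))) o)) ->
      forall n, GX d v prec pa (pre p (phi n)) (v p)) ->
  (forall gamma : list C,
      (exists s, forall o, gX d v prec pa gamma s o <-> GX d v prec pa gamma o) /\
      (exists s, forall o, gX d v prec pb gamma s o <-> GX d v prec pb gamma o)) ->
  (forall E : (nat -> C) -> Prop, (exists p, E p) -> closed_set E ->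
      (exists o, (exists p, E p /\ v p = o) /\
         forall o', (exists p', E p' /\ v p' = o') -> ~ prec o o') /\
      (exists o, (exists p, E p /\ v p = o) /\
         forall o', (exists p', E p' /\ v p' = o') -> ~ prec o' o)) ->
  (forall (I : O -> Prop) (gamma : list C), extremal_interval prec I ->
      Gamma (fun p => I (v p) /\ cyl gamma p)) ->
  (forall (W : (nat -> C) -> Prop) (D : list C -> Prop), Gamma W -> determined D W) ->
  exists sigma : list C -> C, SPE d v prec sigma.
Proof.
  intros swo _ H3 H4 H5 H6.
  assert (L := L_lemma d v prec Gamma swo H5 H6).
  set (sa := fun g => proj1_sig (constructive_indefinite_description _ (proj1 (H3 g)))).
  assert (Hsa : forall g o, gX d v prec pa g (sa g) o <-> GX d v prec pa g o)
    by (intros g; unfold sa; destruct constructive_indefinite_description; auto).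
  set (sb := fun g => proj1_sig (constructive_indefinite_description _ (proj2 (H3 g)))).
  assert (Hsb : forall g o, gX d v prec pb g (sb g) o <-> GX d v prec pb g o)
    by (intros g; unfold sb; destruct constructive_indefinite_description; auto).
  clearbody sa sb.
  assert (dab : forall h, d h <> pa -> d h = pb) by (intros h; destruct (d h); congruence).
  assert (dba : forall h, d h <> pb -> d h = pa) by (intros h; destruct (d h); congruence).
  assert (Ua := U_main d v prec pa pb ltac:(discriminate) dab swo sa sb Hsa Hsb L
                 (fun E a b => proj1 (H4 E a b))).
  assert (Ub := U_main d v prec pb pa ltac:(discriminate) dba (swo_b prec swo) sb sa Hsb Hsa
                 (fun g x y Hx Hy => L g y x Hy Hx)
                 (fun E a b => proj2 (H4 E a b))).
  set (sga := strat d v prec pa sa). set (sgb := strat d v prec pb sb).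
  set (sg := fun h => if Player_eq_dec (d h) pa then sga h else sgb h).
  assert (Hsg : forall h, sg h = if Player_eq_dec (d h) pa then sga h else sgb h) by reflexivity.
  clearbody sg.
  exists sg. intros [g [X [s Hs]]].
  assert (HA : forall t, (forall h, d h = pa -> t h = sga h) -> GX d v prec pa g (v (play g t))).
  { intros t Ht. apply Ua. apply cyl_play. intros n Hn Hd. rewrite play_ge by auto. now apply Ht. }
  assert (HB : forall t, (forall h, d h = pb -> t h = sgb h) -> GX d v prec pb g (v (play g t))).
  { intros t Ht. apply Ub. apply cyl_play. intros n Hn Hd. rewrite play_ge by auto. now apply Ht. }
  assert (H1 : GX d v prec pa g (v (play g sg))).
  { apply HA. intros h Hd. rewrite Hsg. destruct Player_eq_dec; congruence. }
  assert (H2 : GX d v prec pb g (v (play g sg))).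
  { apply HB. intros h Hd. rewrite Hsg. destruct Player_eq_dec; congruence. }
  destruct X; simpl in Hs.
  - assert (H7 : GX d v prec pb g (v (play g (deviate d sg pa s)))).
    { apply HB. intros h Hd. unfold deviate. destruct Player_eq_dec; [congruence|].
      rewrite Hsg. destruct Player_eq_dec; congruence. }
    exact (L _ _ _ H1 H7 Hs).
  - assert (H7 : GX d v prec pa g (v (play g (deviate d sg pb s)))).
    { apply HA. intros h Hd. unfold deviate. destruct Player_eq_dec; [congruence|].
      rewrite Hsg. destruct Player_eq_dec; congruence. }
    exact (L _ _ _ H7 H2 Hs).
Qed.
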